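(* Let $A$, $B$, $C$ be commutative $\mathbf{K}$-algebras, let $D$ and $E$ be associative $\mathbf{K}$-algebras equipped with algebra homomorphisms $\alpha\colon A\otimes B\to Z(D)$ and $\beta\colon B\otimes C\to Z(E)$ (so that $B$ acts centrally on $D$ via $b\mapsto\alpha(1\otimes b)$ and on $E$ via $b\mapsto\beta(b\otimes 1)$). Let $D\otimes_B E$ be the tensor product over $B$, which is an associative algebra. Then the fusion $D\circledast_B E$ equals $D\otimes_B E$ acting on itself by left multiplication; that is, the map $\rho\colon D\otimes_B E\to \mathrm{End}_{\mathbf{K}}(D\otimes_B E)$, $\rho(\xi)(\eta)=\xi\eta$, is an injective algebra homomorphism whose image is exactly $D\circledast_B E$.
   Context: Fusion of associative algebras: given associative $\mathbf{K}$-algebras $D$, $E$, $B$ with algebra homomorphisms $B^{\mathrm{op}}\to D$ and $B\to E$ (here $B$ is commutative, so $B^{\mathrm{op}}=B$, and the maps are the ones induced by $\alpha$ and $\beta$), the fusion $D\circledast_B E$ is the subalgebra of $\mathrm{End}_{\mathbf{K}}(D\otimes_B E)$ generated by $(D\cap (B^{\mathrm{op}})')\cup(B'\cap E)$, where $D\cap(B^{\mathrm{op}})'$ is the commutant in $D$ of the image of $B$, $B'\cap E$ is the commutant in $E$ of the image of $B$, and an element $d$ of $D$ (resp. $e$ of $E$) acts on $D\otimes_B E$ by $\delta\otimes_B\epsilon\mapsto d\delta\otimes_B\epsilon$ (resp. $\delta\otimes_B\epsilon\mapsto\delta\otimes_B e\epsilon$). *)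

(* Defs.v *)
From HB Require Import structures.
From mathcomp Require Import all_boot all_order all_algebra.
Set Implicit Arguments. Unset Strict Implicit. Unset Printing Implicit Defensive.
Import GRing.Theory.
Local Open Scope ring_scope.

(* Tensor product D (x)_B E of a right B-module D and a left B-module E
   (B acting through the algebra maps bD : B -> D and bE : B -> E),
   given by its universal property: T is a K-module with a K-bilinear,
   B-balanced map t : D -> E -> T (t d e = "d (x)_B e") through which every
   K-bilinear B-balanced map factors uniquely by a K-linear map. *)
Definition bilinear_balanced (K : fieldType) (B : comAlgType K)
    (D E : algType K) (bD : B -> D) (bE : B -> E) (M : lmodType K)
    (f : D -> E -> M) : Prop :=
  [/\ forall e, linear (fun d => f d e),
      forall d, linear (f d)
    & forall d b e, f (d * bD b) e = f d (bE b * e)].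

Definition is_tensor_over (K : fieldType) (B : comAlgType K)
    (D E : algType K) (bD : B -> D) (bE : B -> E) (T : lmodType K)
    (t : D -> E -> T) : Prop :=
  bilinear_balanced bD bE t /\
  forall (M : lmodType K) (f : D -> E -> M),
    bilinear_balanced bD bE f ->
    exists g : {linear T -> M},
      (forall d e, g (t d e) = f d e) /\
      (forall g' : {linear T -> M}, (forall d e, g' (t d e) = f d e) ->
         forall x, g' x = g x).

Definition is_tensor_algebra (K : fieldType) (B : comAlgType K)
    (D E : algType K) (bD : B -> D) (bE : B -> E) (T : algType K)
    (t : D -> E -> T) : Prop :=
  [/\ is_tensor_over bD bE t,
      t 1 1 = 1
    & forall d d' e e', t (d * d') (e * e') = t d e * t d' e'].

(* The K-subalgebra of End_K(T) (K-linear maps T -> T, with composition)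
   generated by a set P of endomorphisms; functions are compared pointwise. *)
Inductive gen_subalg (K : fieldType) (T : lmodType K) (P : (T -> T) -> Prop)
  : (T -> T) -> Prop :=
| gen_base f : P f -> gen_subalg P f
| gen_id : gen_subalg P id
| gen_lin a f g : gen_subalg P f -> gen_subalg P g ->
    gen_subalg P (fun x => a *: f x + g x)
| gen_comp f g : gen_subalg P f -> gen_subalg P g -> gen_subalg P (f \o g)
| gen_ext f g : gen_subalg P f -> (forall x, f x = g x) -> gen_subalg P g.

Definition fusion (K : fieldType) (B : comAlgType K)
    (D E : algType K) (bD : B -> D) (bE : B -> E) (T : lmodType K)
    (t : D -> E -> T) : (T -> T) -> Prop :=
  gen_subalg (fun f : T -> T =>
    (exists d : D, (forall b, d * bD b = bD b * d) /\ linear f /\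
        forall x y, f (t x y) = t (d * x) y) \/
    (exists e : E, (forall b, e * bE b = bE b * e) /\ linear f /\
        forall x y, f (t x y) = t x (e * y))).

(* Main.v *)
Require Import Defs.
From HB Require Import structures.
From mathcomp Require Import all_boot all_order all_algebra.
From Stdlib Require Import ClassicalEpsilon FunctionalExtensionality PropExtensionality.
Set Implicit Arguments. Unset Strict Implicit. Unset Printing Implicit Defensive.
Import GRing.Theory.
Local Open Scope ring_scope.

Record subsp (K : fieldType) (T : lmodType K) := Subsp {
  sp :> T -> Prop;
  sp0 : sp 0;
  spL : forall a x y, sp x -> sp y -> sp (a *: x + y) }.

Section QuotDefs.
Variables (K : fieldType) (T : lmodType K) (S : subsp T).
Lemma spD x y : S x -> S y -> S (x + y).
Proof. by move=> hx hy; have := spL 1 hx hy; rewrite scale1r. Qed.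
Lemma spN x : S x -> S (- x).
Proof. by move=> hx; have := spL (-1) hx (sp0 S); rewrite addr0 scaleN1r. Qed.
Lemma spZ a x : S x -> S (a *: x).
Proof. by move=> hx; have := spL a hx (sp0 S); rewrite addr0. Qed.

Lemma spsym x y : S (x - y) -> S (y - x).
Proof. by move=> h; rewrite -opprB; exact: spN. Qed.

Definition rep (x : T) : T := epsilon (inhabits 0) (fun z => S (x - z)).
Lemma rep_spec x : S (x - rep x).
Proof. apply: (epsilon_spec (inhabits 0) (fun z => S (x - z))); exists x; rewrite subrr; exact: sp0. Qed.
Lemma rep_eq x y : S (x - y) -> rep x = rep y.
Proof.
move=> h; rewrite /rep; congr epsilon; apply: functional_extensionality => z.
apply: propositional_extensionality; split => hz.
  by have := spD (spN h) hz; rewrite opprB addrA subrK.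
by have := spD h hz; rewrite addrA subrK.
Qed.
Lemma rep_eqE x y : rep x = rep y -> S (x - y).
Proof.
move=> e; have := spD (rep_spec x) (spN (rep_spec y)).
by rewrite e opprB addrA subrK.
Qed.
Lemma rep_rep x : rep (rep x) = rep x.
Proof. apply: rep_eq; rewrite -opprB; exact: spN (rep_spec x). Qed.
End QuotDefs.

Definition qT (K : fieldType) (T : lmodType K) (S : subsp T) :=
  {y : T | y == rep S y}.
HB.instance Definition _ K T S := Choice.on (@qT K T S).

Section QuotOps.
Variables (K : fieldType) (T : lmodType K) (S : subsp T).
Local Notation Q := (qT S).
Definition mkq (x : T) : Q := exist _ (rep S x) (introT eqP (esym (rep_rep S x))).
Lemma mkq_val (u : Q) : mkq (val u) = u.
Proof. apply: val_inj => /=; case: u => y /= /eqP ->; by rewrite rep_rep. Qed.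
Lemma mkqP x y : mkq x = mkq y <-> S (x - y).
Proof.
split => [e|h]; first by apply: rep_eqE; exact: (congr1 val e).
by apply: val_inj => /=; apply: rep_eq.
Qed.
Lemma mkq_surj (u : Q) : exists x, u = mkq x.
Proof. by exists (val u); rewrite mkq_val. Qed.
Lemma val_mkq x : S (x - val (mkq x)).
Proof. exact: rep_spec. Qed.

Definition qadd (u v : Q) := mkq (val u + val v).
Definition qopp (u : Q) := mkq (- val u).
Definition qzero := mkq 0.
Definition qscale (a : K) (u : Q) := mkq (a *: val u).

Lemma qaddE x y : qadd (mkq x) (mkq y) = mkq (x + y).
Proof.
apply/mkqP/spsym; rewrite opprD addrACA; exact: spD (val_mkq x) (val_mkq y).
Qed.
Lemma qoppE x : qopp (mkq x) = mkq (- x).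
Proof. apply/mkqP; rewrite opprK addrC; exact: val_mkq x. Qed.
Lemma qscaleE a x : qscale a (mkq x) = mkq (a *: x).
Proof. apply/mkqP/spsym; rewrite -scalerBr; exact: spZ (val_mkq x). Qed.

Lemma qaddA : associative qadd.
Proof. move=> u v w; case: (mkq_surj u) (mkq_surj v) (mkq_surj w) => [x ->] [y ->] [z ->]; by rewrite !qaddE addrA. Qed.
Lemma qaddC : commutative qadd.
Proof. move=> u v; case: (mkq_surj u) (mkq_surj v) => [x ->] [y ->]; by rewrite !qaddE addrC. Qed.
Lemma qadd0 : left_id qzero qadd.
Proof. move=> u; case: (mkq_surj u) => [x ->]; by rewrite qaddE add0r. Qed.
Lemma qaddN : left_inverse qzero qopp qadd.
Proof. move=> u; case: (mkq_surj u) => [x ->]; by rewrite qoppE qaddE addNr. Qed.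
HB.instance Definition _ := GRing.isZmodule.Build Q qaddA qaddC qadd0 qaddN.
Lemma qaddE' x y : mkq x + mkq y = mkq (x + y). Proof. exact: qaddE. Qed.

Lemma qscaleA a b u : qscale a (qscale b u) = qscale (a * b) u.
Proof. case: (mkq_surj u) => [x ->]; by rewrite !qscaleE scalerA. Qed.
Lemma qscale1 : left_id 1 qscale.
Proof. move=> u; case: (mkq_surj u) => [x ->]; by rewrite !qscaleE scale1r. Qed.
Lemma qscaleDr : right_distributive qscale +%R.
Proof. move=> a u v; case: (mkq_surj u) (mkq_surj v) => [x ->] [y ->]. rewrite -[mkq x + mkq y]/(qadd (mkq x) (mkq y)) qaddE !qscaleE -[mkq (a *: x) + _]/(qadd _ _) qaddE scalerDr. done. Qed.
Lemma qscaleDl v : {morph qscale^~ v : a b / a + b}.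
Proof. move=> a b; case: (mkq_surj v) => [x ->]; by rewrite !qscaleE -[mkq _ + mkq _]/(qadd _ _) qaddE scalerDl. Qed.
HB.instance Definition _ := GRing.Zmodule_isLmodule.Build K Q qscaleA qscale1 qscaleDr qscaleDl.

Lemma mkq_lin : linear mkq.
Proof. move=> a x y; by rewrite -[a *: mkq x]/(qscale a (mkq x)) qscaleE -[mkq _ + mkq _]/(qadd _ _) qaddE. Qed.
HB.instance Definition _ := GRing.isLinear.Build K T Q *:%R mkq mkq_lin.
End QuotOps.

Definition linwrap (K : fieldType) (U V : lmodType K) (f : U -> V) (hf : linear f) : U -> V := f.
HB.instance Definition _ (K : fieldType) (U V : lmodType K) (f : U -> V) (hf : linear f) := GRing.isLinear.Build K U V *:%R (@linwrap K U V f hf) hf.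

Lemma tensor_uniq (K : fieldType) (B : comAlgType K)
    (D E : algType K) (bD : B -> D) (bE : B -> E) (T : lmodType K)
    (t : D -> E -> T) (M : lmodType K) (f g : T -> M) :
  is_tensor_over bD bE t -> linear f -> linear g ->
  (forall d e, f (t d e) = g (t d e)) -> forall x, f x = g x.
Proof.
move=> [[l1 l2 bal] univ] hf hg fg x.
have bb : bilinear_balanced bD bE (fun d e => f (t d e)).
  split.
  - by move=> e a d d'; rewrite (l1 e) hf.
  - by move=> d a e e'; rewrite (l2 d) hf.
  - by move=> d b e; rewrite bal.
have [h [_ hu]] := univ M _ bb.
have e1 := hu (linwrap hf) (fun d e => erefl).
have e2 := hu (linwrap hg) (fun d e => esym (fg d e)).
by rewrite -[f x]/(linwrap hf x) e1 -e2.
Qed.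

Lemma tensor_span (K : fieldType) (B : comAlgType K)
    (D E : algType K) (bD : B -> D) (bE : B -> E) (T : lmodType K)
    (t : D -> E -> T) (S : subsp T) :
  is_tensor_over bD bE t -> (forall d e, S (t d e)) -> forall x, S x.
Proof.
move=> hT hS x.
have l0 : linear (fun _ : T => (0 : qT S)) by move=> a u v; rewrite scaler0 addr0.
have := tensor_uniq hT (@mkq_lin K T S) l0.
move=> H; have /mkqP : mkq S x = mkq S 0 by apply: H => d e; apply/mkqP; rewrite subr0.
by rewrite subr0.
Qed.

Theorem mainTheorem3 (K : fieldType) (A B C : comAlgType K) (D E : algType K)
    (alphaA : {lrmorphism A -> D}) (alphaB : {lrmorphism B -> D})
    (betaB : {lrmorphism B -> E}) (betaC : {lrmorphism C -> E})
    (hA : forall a x, alphaA a * x = x * alphaA a)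
    (hB : forall b x, alphaB b * x = x * alphaB b)
    (hB' : forall b y, betaB b * y = y * betaB b)
    (hC : forall c y, betaC c * y = y * betaC c)
    (T : algType K) (t : D -> E -> T)
    (hT : is_tensor_algebra alphaB betaB t) :
  let rho := fun xi eta : T => xi * eta in
  ((forall a xi xi' eta, rho (a *: xi + xi') eta = a *: rho xi eta + rho xi' eta) /\
      (forall xi, linear (rho xi)) /\
      (forall eta, rho 1 eta = eta) /\
      (forall xi xi' eta, rho (xi * xi') eta = rho xi (rho xi' eta)) /\
      (forall xi xi', (forall eta, rho xi eta = rho xi' eta) -> xi = xi') /\
    (forall f : T -> T,
         fusion alphaB betaB t f <-> exists xi : T, forall eta, f eta = rho xi eta)).
Proof.
move=> rho; case: hT => hto t11 tmul.
have rlin : forall xi, linear (rho xi).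
  by move=> xi a x y; rewrite /rho mulrDr scalerAr.
split; first by move=> a xi xi' eta; rewrite /rho mulrDl scalerAl.
split; first exact: rlin.
split; first by move=> eta; rewrite /rho mul1r.
split; first by move=> xi xi' eta; rewrite /rho mulrA.
split; first by move=> xi xi' h; have := h 1; rewrite /rho !mulr1.
move=> f; split.
  elim=> {f}.
  - move=> f [[d [_ [hf hd]]]|[e [_ [hf he]]]].
    + exists (t d 1) => eta; apply: (tensor_uniq hto hf (rlin _)) => x y.
      by rewrite hd /rho -tmul mul1r.
    + exists (t 1 e) => eta; apply: (tensor_uniq hto hf (rlin _)) => x y.
      by rewrite he /rho -tmul mul1r.
  - by exists 1 => eta; rewrite /rho mul1r.
  - move=> a f g _ [xf hf] _ [xg hg]; exists (a *: xf + xg) => eta.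
    by rewrite hf hg /rho mulrDl scalerAl.
  - move=> f g _ [xf hf] _ [xg hg]; exists (xf * xg) => eta.
    by rewrite /= hg hf /rho mulrA.
  - by move=> f g _ [xf hf] e; exists xf => eta; rewrite -e hf.
move=> [xi hxi].
have Sx : forall x, fusion alphaB betaB t (rho x).
  have S0 : fusion alphaB betaB t (rho 0).
    apply: (gen_ext (gen_lin (-1) (gen_id _) (gen_id _))) => x.
    by rewrite /rho mul0r scaleN1r addNr.
  have SL : forall a x y, fusion alphaB betaB t (rho x) -> fusion alphaB betaB t (rho y) ->
      fusion alphaB betaB t (rho (a *: x + y)).
    move=> a x y hx hy; apply: (gen_ext (gen_lin a hx hy)) => z.
    by rewrite /rho mulrDl scalerAl.
  apply: (@tensor_span _ _ _ _ _ _ _ _ (@Subsp K T (fun x => fusion alphaB betaB t (rho x)) S0 SL) hto) => d e /=.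
  have -> : rho (t d e) = rho (t d 1) \o rho (t 1 e).
    by apply: functional_extensionality => z; rewrite /rho /= mulrA -tmul mulr1 mul1r.
  apply: gen_comp; apply: gen_base.
  - left; exists d; split; first by move=> b; rewrite hB.
    split; first exact: rlin.
    by move=> x y; rewrite /rho -tmul mul1r.
  - right; exists e; split; first by move=> b; rewrite hB'.
    split; first exact: rlin.
    by move=> x y; rewrite /rho -tmul mul1r.
apply: (gen_ext (Sx xi)) => eta; by rewrite hxi.
Qed.
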